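(* Let $q$ be a prime power, $a\in\mathbb{F}_q^*$, $n\ge 0$ an integer, and let $y\in\mathbb{F}_{q^2}$ with $y\neq 0$, $y^2\neq a$ and $2y\neq a$. Put $x=y(a-y)$. Then $$F_n(a,x)=\frac{a}{2y-a}\bigl(y^n-(a-y)^n\bigr).$$
   Context: For an integer $n\ge 1$, the $n$-th reversed Dickson polynomial of the third kind is $F_n(a,x)=\sum_{i=0}^{\lfloor n/2\rfloor}\frac{n-2i}{n-i}\binom{n-i}{i}(-x)^i a^{n-2i}$, where each coefficient $\frac{n-2i}{n-i}\binom{n-i}{i}$ is an integer (read in the field), and $F_0(a,x)=0$. *)

(* Defs.v *)
From HB Require Import structures.
From mathcomp Require Import all_boot all_order all_algebra all_field.
Set Implicit Arguments. Unset Strict Implicit. Unset Printing Implicit Defensive.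
Import GRing.Theory.
Local Open Scope ring_scope.

(* The integer coefficient (n-2i)/(n-i) * C(n-i,i), computed in nat
   (the division is exact for n >= 1, 0 <= i <= n/2; for n = 0 it gives 0). *)
Definition dickson3_coef (n i : nat) : nat :=
  (((n - 2 * i) * 'C(n - i, i)) %/ (n - i))%N.

Definition revDickson3 (R : nzRingType) (n : nat) (a x : R) : R :=
  if n == 0%N then 0 else
  \sum_(i < (n./2).+1) (dickson3_coef n i)%:R * (- x) ^+ i * a ^+ (n - 2 * i).

(* Main.v *)
Require Import Defs.
From HB Require Import structures.
From mathcomp Require Import all_boot all_order all_algebra all_field.
From mathcomp Require Import zify ring.
Import GRing.Theory.
Local Open Scope ring_scope.

Lemma pascal_gen (m j : nat) :
  'C(m.+1 - j, j.+1) = ('C(m - j, j.+1) + 'C(m - j, j))%N.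
Proof.
case: (leqP j m) => hj.
  by rewrite subSn // binS.
have -> : (m.+1 - j = 0)%N by lia.
have -> : (m - j = 0)%N by lia.
by rewrite !bin0n; case: j hj.
Qed.

Lemma coef_eq (m i : nat) : (2 * i <= m.+1)%N ->
  dickson3_coef m.+1 i = 'C(m - i, i).
Proof.
move=> hi; rewrite /dickson3_coef.
have := mul_bin_down (m.+1 - i) i.
have -> : ((m.+1 - i).-1 = m - i)%N by lia.
have -> : (m.+1 - i - i = m.+1 - 2 * i)%N by lia.
move<-; rewrite mulKn //; lia.
Qed.

Lemma half_facts (m : nat) :
  (m < 2 * (m.+1)./2.+1)%N /\ ((m.+1)./2.+1 <= m.+1)%N.
Proof.
have := odd_double_half m.+1; rewrite -muln2.
move: (odd _) (half _) => b h; case: b => /= e; lia.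
Qed.

Lemma half_bound (m i : nat) : (i < (m.+1)./2.+1)%N -> (2 * i <= m.+1)%N.
Proof.
rewrite ltnS => hi; have := odd_double_half m.+1; rewrite -muln2.
move: hi; move: (odd _) (half _) => b h; case: b => /= hi e; lia.
Qed.

Section S.
Variables (K : fieldType) (a t : K).

Definition T (m i : nat) : K := ('C(m - i, i))%:R * t ^+ i * a ^+ (m - 2 * i).

Lemma Tz m i : (m < 2 * i)%N -> T m i = 0.
Proof. move=> h; rewrite /T bin_small ?mul0r //; lia. Qed.

Lemma Text m M k : (m < 2 * M)%N ->
  \sum_(i < M + k) T m i = \sum_(i < M) T m i.
Proof.
move=> h; elim: k => [|k IH]; first by rewrite addn0.
by rewrite addnS big_ord_recr /= IH Tz ?addr0 //; lia.
Qed.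

Definition U m := \sum_(i < m.+1) T m i.

Lemma Urec m : U m.+2 = a * U m.+1 + t * U m.
Proof.
have e1 : U m.+1 = \sum_(i < m.+3) T m.+1 i.
  by rewrite /U -(Text m.+1 m.+2 1) ?addn1 //; lia.
have e2 : U m = \sum_(i < m.+3) T m i.
  by rewrite /U -(Text m m.+1 2) ?addn2 //; lia.
rewrite e1 e2 /U big_ord_recl [in X in _ = _ * X + _]big_ord_recl.
rewrite [in X in _ = _ + _ * X]big_ord_recr /= [X in _ + _ * (_ + X)]Tz; last lia.
rewrite addr0 mulrDr !mulr_sumr -addrA -big_split /=.
congr (_ + _).
  rewrite /T; rewrite ?subn0 ?muln0 ?subn0 ?bin0 ?expr0 ?mulr1 ?mul1r exprS; ring.
apply: eq_bigr => [[j hj]] _ /=.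
rewrite /T.
have -> : (m.+2 - j.+1 = m.+1 - j)%N by lia.
have -> : (m.+1 - j.+1 = m - j)%N by lia.
have -> : (m.+2 - 2 * j.+1 = m - 2 * j)%N by lia.
rewrite pascal_gen natrD.
case: (leqP (2 * j).+1 m) => h.
  have -> : (m - 2 * j = (m.+1 - 2 * j.+1).+1)%N by lia.
  rewrite exprS !exprS; ring.
rewrite (bin_small (n := m - j)); last lia.
rewrite !exprS; ring.
Qed.

End S.

Lemma keyL (K : fieldType) (a y : K) : forall m : nat,
  (y - (a - y)) * U _ a (- (y * (a - y))) m = y ^+ m.+1 - (a - y) ^+ m.+1
  /\ (y - (a - y)) * U _ a (- (y * (a - y))) m.+1 = y ^+ m.+2 - (a - y) ^+ m.+2.
Proof.
set z := a - y.
  elim=> [|m [IH1 IH2]].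
    split.
      rewrite /U big_ord_recr big_ord0 /T /= ?subn0 ?muln0 bin0 !expr0 /z; ring.
    rewrite /U !big_ord_recr big_ord0 /T /= ?subn0 ?muln0 bin0 bin0n !expr0 !expr1 /z.
    rewrite /= mul0r mul0r addr0; ring.
  split=> //; rewrite Urec.
  have E : forall u v w : K, (y - z) * (a * u + w * v) = a * ((y - z) * u) + w * ((y - z) * v) by move=> *; ring.
  rewrite E IH2 IH1 /z !exprS; ring.
Qed.

Lemma sumL (K : fieldType) (a x : K) (m : nat) :
  \sum_(i < (m.+1)./2.+1)
   (dickson3_coef m.+1 i)%:R * (- x) ^+ i * a ^+ (m.+1 - 2 * i)
   = a * U _ a (- x) m.
Proof.
have -> : \sum_(i < (m.+1)./2.+1)
   (dickson3_coef m.+1 i)%:R * (- x) ^+ i * a ^+ (m.+1 - 2 * i)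
   = a * \sum_(i < (m.+1)./2.+1) T _ a (- x) m i.
  rewrite mulr_sumr; apply: eq_bigr => [[i hi]] _ /=.
  move/half_bound: hi => hi.
  rewrite coef_eq //.
  rewrite /T; case: (leqP (2 * i) m) => h.
    by rewrite subSn // exprS; ring.
  rewrite bin_small; last lia.
  by rewrite !mul0r mulr0.
congr (_ * _).
rewrite /U -(@Text K a (- x) m ((m.+1)./2.+1) (m.+1 - (m.+1)./2.+1)); last by case: (half_facts m).
by case: (half_facts m) => _ h; rewrite subnKC.
Qed.

Theorem lemma2p2 (q : nat) (K : finFieldType) (hq : prime (pdiv q))
  (hqpow : q = (pdiv q ^ logn (pdiv q) q)%N)
  (hK : #|K| = (q ^ 2)%N)
  (a : K) (haq : a ^+ q = a) (ha0 : a != 0) (n : nat) (y : K)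
  (hy0 : y != 0) (hy2 : y ^+ 2 != a) (hy2a : 2%:R * y != a) :
  revDickson3 n a (y * (a - y)) = a / (2%:R * y - a) * (y ^+ n - (a - y) ^+ n).
Proof.
have hd : 2%:R * y - a != 0 by rewrite subr_eq0.
case: n => [|m].
  by rewrite /revDickson3 /= !expr0 subrr mulr0.
rewrite /revDickson3 /= sumL.
have [k1 _] := keyL _ a y m.
rewrite -k1 mulrA.
have -> : y - (a - y) = 2%:R * y - a by ring.
by rewrite mulfVK.
Qed.
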